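(* Assume the setting and standing assumption below. Then the sequence $\{\|g_{k,1}\|\}_{k\in\mathbb{N}}$ converges to zero $R$-linearly: there exist constants $c_1>0$ and $c_2\in(0,1)$, where $c_2$ depends only on $m$, $\rho$ and the eigenvalues of $A$, such that $$\|g_{k,1}\|\le c_1c_2^k\|g_{1,1}\|\quad\text{for all }k\in\mathbb{N}.$$
   Context: Setting: $A\in\mathbb{R}^{n\times n}$ symmetric positive definite with eigenvalues $0<\lambda_1\le\cdots\le\lambda_n$; $b\in\mathbb{R}^n$, $f(x)=\tfrac12x^TAx-b^Tx$, $g_{k,j}=\nabla f(x_{k,j})=Ax_{k,j}-b$. LMSD method with history length $m\in\mathbb{N}$ and tolerance $0$: given $x_{1,1}$ and positive $\alpha_{1,1},\dots,\alpha_{1,m}$, for cycles $k=1,2,\dots$ and $j=1,\dots,m$ set $x_{k,j+1}=x_{k,j}-\alpha_{k,j}g_{k,j}$; set $x_{k+1,1}=x_{k,m+1}$; let $G_k=[g_{k,1}\ \cdots\ g_{k,m}]$, take a thin QR factorization $G_k=Q_kR_k$ ($Q_k^TQ_k=I_m$, $R_k$ upper triangular), $T_k=Q_k^TAQ_k$ with eigenvalues $\theta_{k,1}\ge\cdots\ge\theta_{k,m}$, and set $\alpha_{k+1,j}=\theta_{k,j}^{-1}$. Standing assumption: $g_{k,j}\ne0$ for all $(k,j)$; for every $k$, $G_k$ has linearly independent columns (so $R_k$ is nonsingular); and there is $\rho\ge1$ with $\|R_k^{-1}\|\le\rho\|g_{k,1}\|^{-1}$ for all $k$ (spectral norm). 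*)

(* Defs.v *)
From HB Require Import structures.
From mathcomp Require Import all_boot all_order all_algebra.
Set Implicit Arguments. Unset Strict Implicit. Unset Printing Implicit Defensive.
Import Order.TTheory GRing.Theory Num.Theory.
Local Open Scope ring_scope.

Definition vnorm (R : rcfType) (n : nat) (v : 'cV[R]_n) : R :=
  Num.sqrt (\sum_(i < n) v i 0 ^+ 2).

(* Gradient of f(x) = 1/2 x^T A x - b^T x. *)
Definition grad (R : rcfType) (n : nat) (A : 'M[R]_n) (b x : 'cV[R]_n) : 'cV[R]_n :=
  A *m x - b.

(* G_k = [g_{k,1} ... g_{k,m}]  (0-based: columns j = 0..m-1 of cycle k). *)
Definition Gmat (R : rcfType) (n m : nat) (A : 'M[R]_n) (b : 'cV[R]_n)
  (x : nat -> nat -> 'cV[R]_n) (k : nat) : 'M[R]_(n, m) :=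
  \matrix_(i < n, j < m) grad A b (x k j) i 0.

Definition upper_trig (R : rcfType) (m : nat) (M : 'M[R]_m) : Prop :=
  forall i j : 'I_m, (j < i)%N -> M i j = 0.

(* Main.v *)
Require Import Defs.
From HB Require Import structures.
From mathcomp Require Import all_boot all_order all_algebra.
From mathcomp Require Import ring lra.
Set Implicit Arguments. Unset Strict Implicit. Unset Printing Implicit Defensive.
Import Order.TTheory GRing.Theory Num.Theory.
Local Open Scope ring_scope.

Section Spec.
Variable R : rcfType.

Lemma CtC0 (p q : nat) (C : 'M[R]_(p, q)) : C^T *m C = 0 -> C = 0.
Proof.
move=> H; apply/matrixP => i j; rewrite mxE.
have := congr1 (fun M : 'M[R]_q => M j j) H; rewrite !mxE => /eqP.
rewrite psumr_eq0; last by move=> l _; rewrite mxE -expr2 sqr_ge0.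
move=> /allP /(_ i (mem_index_enum _)) /=; rewrite mxE mulf_eq0 orbb.
by move/eqP.
Qed.

Variable n' : nat.
Local Notation n := n'.+1.

Lemma trmx_exp (B : 'M[R]_n) k : B^T = B -> (B ^+ k)^T = B ^+ k.
Proof.
move=> HB; elim: k => [|k IH]; first by rewrite !expr0 trmx1.
by rewrite exprS -mulmxE trmx_mul IH HB mulmxE -exprSr exprS.
Qed.

Lemma sym_nilp (B : 'M[R]_n) N : B^T = B -> B ^+ N.+1 = 0 -> B = 0.
Proof.
move=> HB HN.
have key : forall j, B ^+ (2 ^ j) = 0 -> B = 0.
  elim=> [|j IH]; first by rewrite expn0 expr1.
  move=> Hj; apply: IH; apply: CtC0.
  by rewrite trmx_exp // mulmxE -exprD addnn -mul2n -expnS.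
apply: (key N.+1).
have lt : (N.+1 <= 2 ^ N.+1)%N by apply: ltnW; apply: ltn_expl.
by rewrite -(subnKC lt) exprD HN mul0r.
Qed.

Lemma horner_sym (A : 'M[R]_n) p : A^T = A -> (horner_mx A p)^T = horner_mx A p.
Proof.
move=> HA; elim/poly_ind: p => [|p c IH]; first by rewrite rmorph0 trmx0.
rewrite rmorphD rmorphM /= horner_mx_X horner_mx_C raddfD /= tr_scalar_mx.
rewrite -mulmxE trmx_mul IH HA; congr (_ + _).
have := comm_horner_mx2 A 'X p; rewrite horner_mx_X /GRing.comm mulmxE => ->.
done.
Qed.

End Spec.

Section Spec2.
Variable R : rcfType.
Variable n' : nat.
Local Notation n := n'.+1.

Lemma spectral (A : 'M[R]_n) (lam : 'I_n -> R) : A^T = A ->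
  char_poly A = \prod_(i < n) ('X - (lam i)%:P) ->
  exists r (mu : 'I_r -> R) (P : 'I_r -> 'M[R]_n),
  injective mu /\ (forall s, exists i, mu s = lam i) /\
  (forall s, A *m P s = mu s *: P s) /\ (forall s, P s *m A = mu s *: P s) /\
  (forall s, (P s)^T = P s) /\ \sum_s P s = 1%:M.
Proof.
move=> HA Hch.
pose mus := undup [seq lam i | i <- enum 'I_n].
have Umus : uniq mus by apply: undup_uniq.
pose q := \prod_(z <- mus) ('X - z%:P).
have Hq : horner_mx A q = 0.
  have Hd : char_poly A %| \prod_(i < n) q.
    rewrite Hch; apply: (big_ind2 (fun a b => a %| b)) => //.
      by move=> ? ? ? ? ? ?; apply: dvdp_mul.
    move=> i _; rewrite dvdp_XsubCl root_prod_XsubC mem_undup.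
    by apply: map_f; rewrite mem_enum.
  move: Hd; rewrite prodr_const card_ord => /dvdpP [w Hw].
  apply: (@sym_nilp _ _ _ n'); first exact: horner_sym.
  by rewrite -rmorphXn /= Hw rmorphM /= Cayley_Hamilton mulr0.
pose r := size mus.
pose mu (s : 'I_r) := nth 0 mus s.
have muinj : injective mu.
  by move=> s t /eqP; rewrite /mu nth_uniq // => /eqP /val_inj.
have qE : q = \prod_(t < r) ('X - (mu t)%:P).
  by rewrite /q (big_nth 0) big_mkord.
pose cc (s : 'I_r) := \prod_(t < r | t != s) (mu s - mu t).
have ccnz : forall s, cc s != 0.
  move=> s; apply/prodf_neq0 => t ts; rewrite subr_eq0.
  by apply/eqP => /muinj /eqP; rewrite eq_sym (negbTE ts).
pose l (s : 'I_r) := (cc s)^-1 *: \prod_(t < r | t != s) ('X - (mu t)%:P).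
have lE : forall s u, (l s).[mu u] = (s == u)%:R.
  move=> s u; rewrite hornerZ horner_prod.
  case: eqP => [<-|/eqP su].
    under eq_bigr do rewrite hornerXsubC; by rewrite mulVf.
  rewrite (bigD1 u) /=; last by rewrite eq_sym.
  by rewrite hornerXsubC subrr mul0r mulr0.
have lX : forall s, ('X - (mu s)%:P) * l s = (cc s)^-1 *: q.
  by move=> s; rewrite /l -scalerAr qE [in RHS](bigD1 s).
pose P s := horner_mx A (l s).
have AP : forall s, A *m P s = mu s *: P s.
  move=> s; apply/eqP; rewrite -subr_eq0; apply/eqP.
  have := congr1 (horner_mx A) (lX s).
  rewrite [in RHS]linearZ /= Hq scaler0 rmorphM /= rmorphB /= horner_mx_X horner_mx_C.
  by rewrite mulrBl -mulmxE mul_scalar_mx.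
exists r, mu, P; split => //; split.
  move=> s; have : mu s \in mus by apply: mem_nth.
  by rewrite mem_undup => /mapP [i _ ->]; exists i.
split => //; split.
  move=> s; rewrite -AP; have := comm_horner_mx2 A 'X (l s).
  by rewrite horner_mx_X /GRing.comm mulmxE.
split; first by move=> s; apply: horner_sym.
pose p := 1 - \sum_s l s.
have rootp : all (root p) mus.
  apply/allP => z zin; rewrite /root /p hornerD hornerN hornerC horner_sum.
  have zi : (index z mus < r)%N by rewrite index_mem.
  have -> : z = mu (Ordinal zi) by rewrite /mu /= nth_index.
  rewrite (bigD1 (Ordinal zi)) //= lE eqxx.
  rewrite big1 ?addr0 ?subrr // => t /negbTE; rewrite lE => -> //.
have Ur : uniq_roots mus by rewrite uniq_rootsE.
have [w Hw] := uniq_roots_prod_XsubC rootp Ur.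
have := congr1 (horner_mx A) Hw.
rewrite rmorphM /= Hq mulr0 /p rmorphB /= rmorph1 rmorph_sum /=.
by move/eqP; rewrite subr_eq0 => /eqP <-.
Qed.

End Spec2.

Definition dotv (R : rcfType) (n : nat) (u v : 'cV[R]_n) : R := (u^T *m v) 0 0.

Section Norms.
Variable R : rcfType.
Variable n : nat.
Implicit Types u v w : 'cV[R]_n.

Lemma dotvE u v : dotv u v = \sum_i u i 0 * v i 0.
Proof. by rewrite /dotv mxE; apply: eq_bigr => i _; rewrite mxE. Qed.

Lemma dotvC u v : dotv u v = dotv v u.
Proof. by rewrite !dotvE; apply: eq_bigr => i _; rewrite mulrC. Qed.

Lemma vnormE v : vnorm v = Num.sqrt (dotv v v).
Proof. by rewrite /vnorm dotvE; congr Num.sqrt; apply: eq_bigr => i _; rewrite expr2. Qed.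

Lemma dotv_ge0 v : 0 <= dotv v v.
Proof. by rewrite dotvE sumr_ge0 // => i _; rewrite -expr2 sqr_ge0. Qed.

Lemma dotv_gt0 v : v != 0 -> 0 < dotv v v.
Proof.
move=> vn0; rewrite lt_def dotv_ge0 andbT; apply: contra vn0 => /eqP H.
apply/eqP/matrixP => i j; rewrite !mxE (ord1 j).
have H' : \sum_l v l 0 ^+ 2 = 0.
  by rewrite -[RHS]H dotvE; apply: eq_bigr => l _; rewrite expr2.
have := @psumr_eq0P _ _ predT (fun l => v l 0 ^+ 2) (fun l _ => sqr_ge0 _) H' i isT.
by move=> /eqP; rewrite sqrf_eq0 => /eqP.
Qed.

Lemma dotvZl a u v : dotv (a *: u) v = a * dotv u v.
Proof. by rewrite /dotv linearZ /= -scalemxAl mxE. Qed.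

Lemma dotvZr a u v : dotv u (a *: v) = a * dotv u v.
Proof. by rewrite /dotv -scalemxAr mxE. Qed.

Lemma dotvDr u v w : dotv u (v + w) = dotv u v + dotv u w.
Proof. by rewrite /dotv mulmxDr mxE. Qed.

Lemma dotv_sumr (I : finType) u (F : I -> 'cV[R]_n) :
  dotv u (\sum_i F i) = \sum_i dotv u (F i).
Proof. by rewrite /dotv mulmx_sumr summxE. Qed.

Lemma dotvM u (M : 'M[R]_n) v : dotv u (M *m v) = dotv (M^T *m u) v.
Proof. by rewrite /dotv trmx_mul trmxK mulmxA. Qed.

Lemma dotvZZ a v : dotv (a *: v) (a *: v) = a ^+ 2 * dotv v v.
Proof. by rewrite dotvZl dotvZr mulrA expr2. Qed.

End Norms.

Section SpecCons.
Variable R : rcfType.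
Variable n r : nat.
Variable A : 'M[R]_n.
Variable mu : 'I_r -> R.
Variable P : 'I_r -> 'M[R]_n.
Hypothesis muinj : injective mu.
Hypothesis AP : forall s, A *m P s = mu s *: P s.
Hypothesis PA : forall s, P s *m A = mu s *: P s.
Hypothesis Psym : forall s, (P s)^T = P s.
Hypothesis Psum : \sum_s P s = 1%:M.

Lemma PPo s t : s != t -> P s *m P t = 0.
Proof.
move=> st.
have E : (mu s - mu t) *: (P s *m P t) = 0.
  by rewrite scalerBl scalemxAl -PA scalemxAr -AP mulmxA subrr.
have nz : mu s - mu t != 0.
  by rewrite subr_eq0; apply: contra st => /eqP /muinj ->.
by rewrite -[P s *m P t]scale1r -(mulVf nz) -scalerA E scaler0.
Qed.

Lemma PP s : P s *m P s = P s.
Proof.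
rewrite -{3}[P s]mulmx1 -Psum mulmx_sumr (bigD1 s) //= big1 ?addr0 //.
by move=> t ts; apply: PPo; rewrite eq_sym.
Qed.

Lemma Pv_norm s v : dotv (P s *m v) (P s *m v) = dotv v (P s *m v).
Proof. by rewrite dotvM Psym mulmxA PP dotvC. Qed.

Lemma decomp v (M : 'M[R]_n) : dotv v (M *m v) = \sum_s dotv v (M *m (P s *m v)).
Proof.
by rewrite -dotv_sumr -mulmx_sumr -mulmx_suml Psum mul1mx.
Qed.

Lemma norm_decomp v : dotv v v = \sum_s dotv (P s *m v) (P s *m v).
Proof.
rewrite -{2}[v]mul1mx decomp; apply: eq_bigr => s _.
by rewrite mul1mx Pv_norm.
Qed.

Lemma A_decomp v : dotv v (A *m v) = \sum_s mu s * dotv (P s *m v) (P s *m v).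
Proof.
rewrite decomp; apply: eq_bigr => s _.
by rewrite mulmxA AP -scalemxAl dotvZr Pv_norm.
Qed.

Lemma P_A s (v : 'cV[R]_n) : P s *m (A *m v) = mu s *: (P s *m v).
Proof. by rewrite mulmxA PA scalemxAl. Qed.

End SpecCons.

Section Level.
Variable R : rcfType.

Lemma level_lemma (a L hN : nat -> R) (Kc eps D gam : R) :
  0 <= Kc -> 0 < eps -> 0 < gam -> 0 <= D ->
  (forall k, (1 <= k)%N -> 0 <= a k <= hN k) ->
  (forall k, (1 <= k)%N -> a k.+1 <= Kc * a k) ->
  (forall k, (1 <= k)%N -> L k <= eps * hN k -> a k.+2 <= gam * a k.+1) ->
  (forall k, (1 <= k)%N -> L k <= D * gam ^+ k) ->
  exists E, 0 <= E /\ forall k, (1 <= k)%N -> a k <= E * gam ^+ k.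
Proof.
move=> Kc0 eps0 gam0 D0 Ha Hg Hc HL.
have [a10 _] := andP (Ha 1%N isT); have [a20 _] := andP (Ha 2%N isT).
have gam20 : 0 < gam ^+ 2 by rewrite exprn_gt0.
pose E1 := a 1%N / gam; pose E2 := a 2%N / gam ^+ 2.
pose E3 := Kc ^+ 2 * D / (eps * gam ^+ 2).
have E10 : 0 <= E1 by rewrite divr_ge0 // ltW.
have E20 : 0 <= E2 by rewrite divr_ge0 // ltW.
have E30 : 0 <= E3 by rewrite divr_ge0 ?mulr_ge0 ?exprn_ge0 // ltW // mulr_gt0.
exists (E1 + E2 + E3); split; first by rewrite !addr_ge0.
have E1e : E1 * gam = a 1%N by rewrite /E1 divfK // gt_eqF.
have E2e : E2 * gam ^+ 2 = a 2%N by rewrite /E2 divfK // gt_eqF.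
have E3e : E3 * (eps * gam ^+ 2) = Kc ^+ 2 * D by rewrite /E3 divfK // gt_eqF // mulr_gt0.
set E := E1 + E2 + E3.
have hE1 : E1 <= E by rewrite /E; lra.
have hE2 : E2 <= E by rewrite /E; lra.
have hE3 : E3 <= E by rewrite /E; lra.
have main : forall k, a k.+1 <= E * gam ^+ k.+1 /\ a k.+2 <= E * gam ^+ k.+2.
  elim=> [|k [IH1 IH2]].
    split.
      rewrite expr1 -[X in X <= _]E1e; apply: ler_wpM2r => //; exact: ltW.
    rewrite -[X in X <= _]E2e; apply: ler_wpM2r => //; exact: ltW.
  split => //.
  have gk0 : 0 <= gam ^+ k.+1 by rewrite exprn_ge0 // ltW.
  have [HB|HA] := boolP (L k.+1 <= eps * hN k.+1).
    apply: le_trans (Hc k.+1 isT HB) _.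
    by rewrite [gam ^+ k.+3]exprS mulrCA ler_wpM2l // ltW.
  move: HA; rewrite -ltNge => HA.
  have [ak0 akh] := andP (Ha k.+1 isT).
  have h1 : eps * a k.+1 <= D * gam ^+ k.+1.
    apply: le_trans (HL k.+1 isT); apply: ltW; apply: le_lt_trans HA.
    by rewrite ler_wpM2l // ltW.
  have h2 : a k.+3 <= Kc ^+ 2 * a k.+1.
    apply: le_trans (Hg k.+2 isT) _.
    by rewrite expr2 -mulrA ler_wpM2l // Hg.
  have h3 : eps * a k.+3 <= Kc ^+ 2 * D * gam ^+ k.+1.
    apply: le_trans (_ : eps * (Kc ^+ 2 * a k.+1) <= _).
      by rewrite ler_wpM2l // ltW.
    by rewrite mulrCA -mulrA ler_wpM2l ?exprn_ge0.
  have h4 : a k.+3 <= E3 * gam ^+ k.+3.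
    rewrite -(ler_pM2l eps0); apply: le_trans h3 _.
    rewrite le_eqVlt; apply/orP; left; apply/eqP.
    rewrite -E3e !exprS. ring.
  apply: le_trans h4 _; apply: ler_wpM2r => //; exact: exprn_ge0 (ltW gam0).
move=> k k1; case: k k1 => // k _; exact: (main k).1.
Qed.

End Level.

Section CS.
Variable R : rcfType.

Lemma sum_sqr_le (m : nat) (y : 'I_m -> R) :
  (\sum_j y j) ^+ 2 <= m%:R * \sum_j y j ^+ 2.
Proof.
have H : 0 <= \sum_i \sum_j (y i - y j) ^+ 2.
  by apply: sumr_ge0 => i _; apply: sumr_ge0 => j _; apply: sqr_ge0.
have E : \sum_i \sum_j (y i - y j) ^+ 2 =
    2%:R * (m%:R * \sum_j y j ^+ 2) - 2%:R * (\sum_j y j) ^+ 2.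
  transitivity (\sum_i \sum_j (y i ^+ 2 + y j ^+ 2 - 2%:R * (y i * y j))).
    by apply: eq_bigr => i _; apply: eq_bigr => j _; ring.
  under eq_bigr do rewrite sumrB big_split /=.
  rewrite sumrB big_split /= sumr_const card_ord exchange_big /= sumr_const card_ord.
  have -> : \sum_i \sum_j 2%:R * (y i * y j) = 2%:R * (\sum_j y j) ^+ 2.
    rewrite expr2 mulr_suml mulr_sumr; apply: eq_bigr => i _.
    by rewrite mulr_sumr mulr_sumr.
  rewrite -[_ *+ m]mulr_natl; ring.
move: H; rewrite E subr_ge0 => H.
by rewrite -(ler_pM2l (_ : 0 < 2%:R)) // ltr0n.
Qed.

End CS.

Lemma sqrt_bound (R : rcfType) (a d e rh : R) : 0 <= a -> 0 < d -> 0 <= e -> 0 <= rh ->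
  Num.sqrt a <= rh / Num.sqrt d * Num.sqrt e -> a * d <= rh ^+ 2 * e.
Proof.
move=> a0 d0 e0 rh0 H.
have sd0 : 0 < Num.sqrt d by rewrite sqrtr_gt0.
have H2 : Num.sqrt a * Num.sqrt d <= rh * Num.sqrt e.
  by rewrite -ler_pdivlMr // mulrAC.
have sa0 : 0 <= Num.sqrt a * Num.sqrt d by rewrite mulr_ge0 ?sqrtr_ge0 // ltW.
have : (Num.sqrt a * Num.sqrt d) ^+ 2 <= (rh * Num.sqrt e) ^+ 2.
  by rewrite lerXn2r // ?nnegrE // mulr_ge0 ?sqrtr_ge0.
by rewrite !exprMn !sqr_sqrtr // ltW.
Qed.

Lemma dotvMg (R : rcfType) (p q : nat) (u : 'cV[R]_p) (M : 'M[R]_(p, q)) (v : 'cV[R]_q) :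
  dotv u (M *m v) = dotv (M^T *m u) v.
Proof. by rewrite /dotv trmx_mul trmxK mulmxA. Qed.

Section Main.
Variable R : rcfType.
Variables (n' m : nat) (rho lo hi : R).
Local Notation n := n'.+1.
Variables (A : 'M[R]_n) (b : 'cV[R]_n) (x : nat -> nat -> 'cV[R]_n)
  (alpha : nat -> nat -> R) (Q : nat -> 'M[R]_(n, m)) (Rf : nat -> 'M[R]_m)
  (theta : nat -> nat -> R).
Variables (r : nat) (mu : 'I_r -> R) (P : 'I_r -> 'M[R]_n).
Hypothesis m0 : (0 < m)%N.
Hypothesis rho1 : 1 <= rho.
Hypothesis lo0 : 0 < lo.
Hypothesis lohi : lo <= hi.
Hypothesis HA : A^T = A.
Hypothesis muinj : injective mu.
Hypothesis AP : forall s, A *m P s = mu s *: P s.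
Hypothesis PA : forall s, P s *m A = mu s *: P s.
Hypothesis Psym : forall s, (P s)^T = P s.
Hypothesis Psum : \sum_s P s = 1%:M.
Hypothesis mub : forall s, lo <= mu s <= hi.
Hypothesis Hx : forall k j, (j < m)%N -> x k j.+1 = x k j - alpha k j *: grad A b (x k j).
Hypothesis Hx0 : forall k, x k.+1 0%N = x k m.
Hypothesis HQR : forall k, Gmat m A b x k = Q k *m Rf k.
Hypothesis HQQ : forall k, (Q k)^T *m Q k = 1%:M.
Hypothesis Hth : forall k, char_poly ((Q k)^T *m A *m Q k) = \prod_(j < m) ('X - (theta k j)%:P).
Hypothesis Hal : forall k j, (j < m)%N -> alpha k.+1 j = (theta k j)^-1.
Hypothesis Hgnz : forall k j, (j < m)%N -> grad A b (x k j) != 0.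
Hypothesis Hfree : forall k, row_free (Gmat m A b x k)^T.
Hypothesis Hrho : forall k (v : 'cV[R]_m),
  vnorm (invmx (Rf k) *m v) <= rho / vnorm (grad A b (x k 0%N)) * vnorm v.

Local Notation g k j := (grad A b (x k j)).
Local Notation h k := (grad A b (x k 0%N)).
Local Notation G k := (Gmat m A b x k).

Lemma gstep k j : (j < m)%N -> g k j.+1 = g k j - alpha k j *: (A *m g k j).
Proof.
move=> jm; rewrite {1}/grad Hx // mulmxBr -scalemxAr /grad.
by rewrite addrAC.
Qed.

Lemma Pg s k j : (j <= m)%N ->
  P s *m g k j = (\prod_(l < j) (1 - alpha k l * mu s)) *: (P s *m h k).
Proof.
elim: j => [|j IH] jm; first by rewrite big_ord0 scale1r.
rewrite gstep // mulmxBr -scalemxAr (P_A PA) IH ?(ltnW jm) //.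
by rewrite !scalerA -scalerBl big_ord_recr /=; congr (_ *: _); ring.
Qed.

Lemma Phnext s k :
  P s *m h k.+1 = (\prod_(l < m) (1 - alpha k l * mu s)) *: (P s *m h k).
Proof. by rewrite Hx0 Pg. Qed.

Lemma Runit k : Rf k \in unitmx.
Proof.
rewrite -row_free_unit /row_free eqn_leq rank_leq_row /=.
have := Hfree k; rewrite /row_free HQR trmx_mul => /eqP E.
apply: leq_trans (_ : (\rank ((Rf k)^T *m (Q k)^T) <= _)%N); first by rewrite E.
by apply: leq_trans (mxrankM_maxl _ _) _; rewrite mxrank_tr.
Qed.

Lemma Gc k (c : 'cV[R]_m) : G k *m c = \sum_(j < m) c j 0 *: g k j.
Proof.
apply/matrixP => i z; rewrite (ord1 z) !mxE summxE; apply: eq_bigr => j _.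
by rewrite !mxE mulrC.
Qed.

Lemma dotv0 (p : nat) : dotv (0 : 'cV[R]_p) 0 = 0.
Proof. by rewrite /dotv mulmx0 mxE. Qed.

Lemma ritz k j : (j < m)%N -> exists c : 'cV[R]_m,
  [/\ G k *m c != 0,
      theta k j * dotv (G k *m c) (G k *m c) = dotv (G k *m c) (A *m (G k *m c)) &
      dotv c c * dotv (h k) (h k) <= rho ^+ 2 * dotv (G k *m c) (G k *m c)].
Proof.
move=> jm; set T := (Q k)^T *m A *m Q k.
have rt : root (char_poly T) (theta k j).
  rewrite /T Hth /root horner_prod (bigD1 (Ordinal jm)) //=.
  by rewrite hornerXsubC subrr mul0r.
have /eigenvalueP [w Hw wn0] : eigenvalue T (theta k j) by rewrite eigenvalue_root_char.
pose c := invmx (Rf k) *m w^T.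
exists c.
have Gce : G k *m c = Q k *m w^T.
  by rewrite /c HQR -mulmxA (mulmxA (Rf k)) mulmxV ?Runit // mul1mx.
have Tsym : T^T = T by rewrite /T !trmx_mul trmxK HA mulmxA.
have Tw : T *m w^T = theta k j *: w^T.
  by rewrite -Tsym -trmx_mul Hw linearZ.
have du : dotv (G k *m c) (G k *m c) = dotv w^T w^T.
  by rewrite Gce dotvMg mulmxA HQQ mul1mx.
have wT0 : w^T != 0 by rewrite trmx_eq0.
have dpos : 0 < dotv (G k *m c) (G k *m c) by rewrite du dotv_gt0.
split.
- by apply/eqP => u0; move: dpos; rewrite u0 dotv0 ltxx.
- rewrite du Gce (dotvC (Q k *m w^T)) dotvMg.
  have -> : (Q k)^T *m (A *m (Q k *m w^T)) = T *m w^T by rewrite /T !mulmxA.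
  by rewrite Tw dotvZl.
- have := Hrho k w^T; rewrite -/c !vnormE -du => H.
  apply: sqrt_bound => //; first exact: dotv_ge0.
    by apply: dotv_gt0; apply: Hgnz.
  exact: dotv_ge0.
  by apply: le_trans rho1.
Qed.

Local Notation ND := (norm_decomp muinj AP PA Psym Psum).
Local Notation AD := (A_decomp muinj AP PA Psym Psum).

Lemma quad_bnd (v : 'cV[R]_n) :
  lo * dotv v v <= dotv v (A *m v) <= hi * dotv v v.
Proof.
rewrite AD ND !mulr_sumr; apply/andP; split; apply: ler_sum => s _.
  by rewrite ler_wpM2r ?dotv_ge0 //; case/andP: (mub s).
by rewrite ler_wpM2r ?dotv_ge0 //; case/andP: (mub s).
Qed.

Lemma theta_bnd k j : (j < m)%N -> lo <= theta k j <= hi.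
Proof.
move=> jm; have [c [u0 Hu _]] := ritz k jm.
have dpos := dotv_gt0 u0.
have /andP [H1 H2] := quad_bnd (G k *m c).
by rewrite -(ler_pM2r dpos) -[theta k j <= hi](ler_pM2r dpos) Hu H1 H2.
Qed.

Local Notation kap2 := ((hi / lo) ^+ 2).
Local Notation Kc := (kap2 ^+ m).

Lemma kap1 : 1 <= hi / lo.
Proof. by rewrite ler_pdivlMr // mul1r. Qed.

Lemma fac_bnd k l (z : R) : (1 <= k)%N -> (l < m)%N -> lo <= z <= hi ->
  (1 - alpha k l * z) ^+ 2 <= kap2.
Proof.
case: k => // k _ lm /andP [z1 z2].
rewrite Hal //; have /andP [t1 t2] := theta_bnd k lm.
have t0 : 0 < theta k l by apply: lt_le_trans t1.
set y := (theta k l)^-1 * z.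
have y0 : 0 <= y by rewrite mulr_ge0 // ?invr_ge0 ltW // (lt_le_trans lo0).
have yk : y <= hi / lo.
  rewrite /y mulrC; apply: ler_pM => //; first by apply: ltW; apply: lt_le_trans z1.
    by rewrite invr_ge0 ltW.
  by rewrite lef_pV2 ?posrE.
have := kap1; move: yk; set K := hi / lo => yk K1.
have : 0 <= (K - 1 + y) * (K + 1 - y) by apply: mulr_ge0; lra.
nra.
Qed.

Lemma prod_bnd k j (z : R) : (1 <= k)%N -> (j <= m)%N -> lo <= z <= hi ->
  (\prod_(l < j) (1 - alpha k l * z)) ^+ 2 <= Kc.
Proof.
move=> k1 jm zb; rewrite -prodrXl.
apply: le_trans (_ : \prod_(l < j) kap2 <= _).
  apply: ler_prod => l _; rewrite sqr_ge0 /=; apply: fac_bnd => //.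
  exact: leq_trans (ltn_ord l) jm.
rewrite prodr_const card_ord; apply: ler_weXn2l => //.
exact: exprn_ege1 kap1.
Qed.

Lemma growth s k : (1 <= k)%N ->
  dotv (P s *m h k.+1) (P s *m h k.+1) <= Kc * dotv (P s *m h k) (P s *m h k).
Proof.
move=> k1; rewrite Phnext dotvZZ ler_wpM2r ?dotv_ge0 //.
exact: prod_bnd.
Qed.

Lemma kry s k (c : 'cV[R]_m) : (1 <= k)%N ->
  dotv (P s *m (G k *m c)) (P s *m (G k *m c)) <=
  m%:R * Kc * dotv c c * dotv (P s *m h k) (P s *m h k).
Proof.
move=> k1; rewrite Gc mulmx_sumr.
have -> : \sum_(j < m) P s *m (c j 0 *: g k j) =
   (\sum_(j < m) c j 0 * \prod_(l < j) (1 - alpha k l * mu s)) *: (P s *m h k).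
  rewrite scaler_suml; apply: eq_bigr => j _.
  by rewrite -scalemxAr (Pg s k (ltnW (ltn_ord j))) scalerA.
rewrite dotvZZ ler_wpM2r ?dotv_ge0 //.
apply: le_trans (sum_sqr_le _) _.
rewrite -mulrA ler_wpM2l ?ler0n // dotvE mulr_sumr; apply: ler_sum => j _.
rewrite exprMn mulrC -expr2 ler_wpM2r ?sqr_ge0 //.
by apply: prod_bnd => //; apply: ltnW.
Qed.

Local Notation a s k := (dotv (P s *m h k) (P s *m h k)).
Local Notation eps2 := ((3%:R * m%:R * Kc * rho ^+ 2)^-1).
Local Notation del := (1 - lo / (2%:R * hi)).

Lemma Kc_ge1 : 1 <= Kc.
Proof.
by apply: exprn_ege1; apply: exprn_ege1 kap1.
Qed.

Lemma eps2_pos : 0 < eps2.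
Proof.
have K0 : 0 < Kc by apply: lt_le_trans Kc_ge1.
have r0 : 0 < rho by apply: lt_le_trans rho1.
rewrite invr_gt0; apply: mulr_gt0; last exact: exprn_gt0.
by apply: mulr_gt0 => //; apply: mulr_gt0; rewrite ltr0n.
Qed.

Lemma theta_low s k j : (1 <= k)%N -> (j < m)%N ->
  \sum_(t | mu t < mu s) a t k <= eps2 * dotv (h k) (h k) ->
  2%:R * mu s <= 3%:R * theta k j.
Proof.
move=> k1 jm HL.
have [c [u0 Hu Hc]] := ritz k jm.
set u := G k *m c in u0 Hu Hc.
have dpos := dotv_gt0 u0.
have hpos : 0 < dotv (h k) (h k) by apply: dotv_gt0; apply: Hgnz.
set du := dotv u u in dpos Hu Hc.
set low := \sum_(t | mu t < mu s) dotv (P t *m u) (P t *m u).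
have mK0 : 0 <= m%:R * Kc * dotv c c by rewrite !mulr_ge0 ?ler0n ?dotv_ge0 // (le_trans ler01 Kc_ge1).
have low1 : low <= m%:R * Kc * dotv c c * \sum_(t | mu t < mu s) a t k.
  by rewrite mulr_sumr; apply: ler_sum => t _; apply: kry.
have low2 : 3%:R * low <= du.
  apply: le_trans (_ : 3%:R * (m%:R * Kc * dotv c c * (eps2 * dotv (h k) (h k))) <= _).
    by rewrite ler_wpM2l ?ler0n //; apply: le_trans low1 _; rewrite ler_wpM2l.
  have epsE : (3%:R * m%:R * Kc * rho ^+ 2) * eps2 = 1.
    by rewrite mulfV // gt_eqF // -invr_gt0 eps2_pos.
  have e1 : 3%:R * (m%:R * Kc * dotv c c * (eps2 * dotv (h k) (h k))) =
           (3%:R * m%:R * Kc * eps2) * (dotv c c * dotv (h k) (h k)) by ring.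
  have c0 : 0 <= 3%:R * m%:R * Kc * eps2.
    by rewrite !mulr_ge0 ?ler0n // ltW // (lt_le_trans ltr01 Kc_ge1, eps2_pos).
  rewrite e1; apply: le_trans (ler_wpM2l c0 Hc) _.
  rewrite le_eqVlt; apply/orP; left; apply/eqP.
  transitivity ((3%:R * m%:R * Kc * rho ^+ 2) * eps2 * du); first by ring.
  by rewrite epsE mul1r.
have lowge0 : 0 <= low by apply: sumr_ge0 => t _; apply: dotv_ge0.
have split1 : du = low + \sum_(t | ~~ (mu t < mu s)) dotv (P t *m u) (P t *m u).
  by rewrite /du ND (bigID (fun t => mu t < mu s)).
have quad : mu s * (du - low) <= theta k j * du.
  rewrite Hu AD (bigID (fun t => mu t < mu s)) /= split1 addrAC subrr add0r.
  apply: le_trans (_ : \sum_(t | ~~ (mu t < mu s)) mu t * dotv (P t *m u) (P t *m u) <= _).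
    rewrite mulr_sumr; apply: ler_sum => t; rewrite -leNgt => tle.
    by rewrite ler_wpM2r ?dotv_ge0.
  rewrite lerDr; apply: sumr_ge0 => t _; rewrite mulr_ge0 ?dotv_ge0 //.
  by case/andP: (mub t) => + _; apply: le_trans; apply: ltW.
have mus0 : 0 <= mu s by case/andP: (mub s) => + _; apply: le_trans; apply: ltW.
have : 2%:R * mu s * du <= 3%:R * theta k j * du.
  by nra.
by rewrite ler_pM2r.
Qed.

Lemma del_bnd : 1 / 2%:R <= del <= 1.
Proof.
have hi0 : 0 < hi by apply: lt_le_trans lohi.
have w0 : 0 < lo / hi by rewrite divr_gt0.
have w1 : lo / hi <= 1 by rewrite ler_pdivrMr // mul1r.
have -> : lo / (2%:R * hi) = (lo / hi) / 2%:R by field; rewrite gt_eqF.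
set w := lo / hi in w0 w1 *.
apply/andP; split.
  rewrite ler_pdivrMr ?ltr0n // mulrBl mul1r mulfVK ?pnatr_eq0 //; lra.
rewrite lerBlDr lerDl divr_ge0 // ?ltW //.
Qed.

Lemma contr s k : (1 <= k)%N ->
  \sum_(t | mu t < mu s) a t k <= eps2 * dotv (h k) (h k) ->
  a s k.+2 <= del ^+ 2 * a s k.+1.
Proof.
move=> k1 HL.
have hi0 : 0 < hi by apply: lt_le_trans lohi.
have /andP [d1 d2] := del_bnd.
rewrite Phnext dotvZZ ler_wpM2r ?dotv_ge0 //.
have fb : forall l, (l < m)%N -> (1 - alpha k.+1 l * mu s) ^+ 2 <= del ^+ 2.
  move=> l lm; rewrite Hal //.
  have th := theta_low k1 lm HL; have /andP [t1 t2] := theta_bnd k lm.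
  have t0 : 0 < theta k l by apply: lt_le_trans t1.
  set y := (theta k l)^-1 * mu s.
  have ty : theta k l * y = mu s by rewrite /y mulrA mulfV ?mul1r // gt_eqF.
  have /andP [z1 z2] := mub s.
  have w0 : 0 < lo / hi by rewrite divr_gt0.
  have w1 : lo / hi <= 1 by rewrite ler_pdivrMr // mul1r.
  have hw : hi * (lo / hi) = lo by rewrite mulrC divfK // gt_eqF.
  have -> : lo / (2%:R * hi) = (lo / hi) / 2%:R by field; rewrite gt_eqF.
  move: hw w0 w1; set w := lo / hi => hw w0 w1.
  have yw : w <= y.
    rewrite -(ler_pM2l t0) ty; apply: le_trans z1; rewrite -hw.
    by rewrite ler_wpM2r // ltW.
  have y32 : 2%:R * y <= 3%:R.
    by rewrite -(ler_pM2l t0) mulrCA ty [_ * 3%:R]mulrC.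
  set d := 1 - w / 2%:R.
  have : 0 <= (d - (1 - y)) * (d + (1 - y)) by apply: mulr_ge0; rewrite /d; lra.
  nra.
rewrite -prodrXl; apply: (@le_trans _ _ (\prod_(l < m) del ^+ 2)).
  by apply: ler_prod => l _; rewrite sqr_ge0 fb.
rewrite prodr_const card_ord; apply: ler_iXnr => //; first exact: sqr_ge0.
have dge0 : 0 <= del by apply: le_trans _ d1; rewrite divr_ge0 ?ler0n.
by rewrite expr_le1.
Qed.

Lemma cnt_lt s t : mu t < mu s ->
  (#|[pred u | (mu u < mu t)%R]| < #|[pred u | (mu u < mu s)%R]|)%N.
Proof.
move=> ts; apply: proper_card; apply/properP; split.
  by apply/subsetP => u; rewrite !inE => H; apply: lt_trans ts.
by exists t; rewrite !inE ?ltxx.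
Qed.

Lemma conv : exists F, 0 <= F /\ forall k, (1 <= k)%N -> dotv (h k) (h k) <= F * (del ^+ 2) ^+ k.
Proof.
have /andP [d1 d2] := del_bnd.
have gam0 : 0 < del ^+ 2.
  by rewrite exprn_gt0 //; apply: lt_le_trans d1; rewrite divr_gt0 ?ltr0n.
set gam := del ^+ 2 in gam0 *.
pose cnt s := #|[pred u | mu u < mu s]|.
have Psi : forall N, exists D, 0 <= D /\ forall s, (cnt s < N)%N ->
    forall k, (1 <= k)%N -> a s k <= D * gam ^+ k.
  elim=> [|N [D [D0 HD]]]; first by exists 0; split.
  have : forall s, exists E, 0 <= E /\ ((cnt s < N.+1)%N ->
      forall k, (1 <= k)%N -> a s k <= E * gam ^+ k).
    move=> s; case: (ltnP (cnt s) N) => [lt|ge].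
      by exists D; split => // _; apply: HD.
    case: (ltnP (cnt s) N.+1) => [lt1|ge1]; last first.
      by exists 0; split => //; rewrite ltnNge ge1.
    have cN : cnt s = N by apply/eqP; rewrite eqn_leq ge -ltnS lt1.
    have Lb : forall k, (1 <= k)%N ->
        \sum_(t | mu t < mu s) a t k <= (r%:R * D) * gam ^+ k.
      move=> k k1; rewrite big_mkcond /=.
      apply: le_trans (_ : \sum_(t < r) D * gam ^+ k <= _).
        apply: ler_sum => t _; case: ifP => ts.
          by apply: HD => //; rewrite -cN; apply: cnt_lt.
        by rewrite mulr_ge0 // exprn_ge0 // ltW.
      by rewrite sumr_const card_ord -[_ *+ r]mulr_natl mulrA.
    have Hab : forall k, (1 <= k)%N -> 0 <= a s k <= dotv (h k) (h k).
      move=> k _; rewrite dotv_ge0 /= [X in _ <= X]ND (bigD1 s) //= lerDl sumr_ge0 // => t _.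
      exact: dotv_ge0.
    have [E [E0 HE]] := level_lemma (a := fun k => a s k)
      (L := fun k => \sum_(t | mu t < mu s) a t k)
      (hN := fun k => dotv (h k) (h k)) (Kc := Kc) (eps := eps2) (D := r%:R * D)
      (gam := gam) (ltW (lt_le_trans ltr01 Kc_ge1)) eps2_pos gam0
      (mulr_ge0 (ler0n _ _) D0)
      Hab (fun k k1 => growth s k1) (fun k k1 => contr k1) Lb.
    by exists E; split => // _.
  move/fin_all_exists => [E HE].
  exists (\sum_s E s); split; first by apply: sumr_ge0 => s _; case: (HE s).
  move=> s cs k k1; have [E0 HEs] := HE s.
  apply: le_trans (HEs cs k k1) _; apply: ler_wpM2r; first by rewrite exprn_ge0 // ltW.
  rewrite (bigD1 s) //= lerDl sumr_ge0 // => t _; by case: (HE t).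
have [D [D0 HD]] := Psi r.+1.
exists (r%:R * D); split; first by rewrite mulr_ge0 ?ler0n.
move=> k k1; rewrite ND.
apply: le_trans (_ : \sum_(s < r) D * gam ^+ k <= _).
  apply: ler_sum => s _; apply: HD => //.
  by rewrite ltnS /cnt; apply: leq_trans (max_card _) _; rewrite card_ord.
by rewrite sumr_const card_ord -[_ *+ r]mulr_natl mulrA.
Qed.

End Main.

(* 0-based indexing: cycle k (paper) = k.+1 here, inner index j (paper) = j.+1 here;
   x k j for j <= m, with x k m = x_{k,m+1}. *)
Theorem mainTheorem8 (R : rcfType) (n m : nat) (rho : R) (lam : 'I_n -> R) :
  (0 < m)%N -> 1 <= rho ->
  (forall i, 0 < lam i) ->
  (forall i j : 'I_n, (i <= j)%N -> lam i <= lam j) ->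
  exists c2 : R, 0 < c2 < 1 /\
  forall (A : 'M[R]_n) (b : 'cV[R]_n) (x : nat -> nat -> 'cV[R]_n)
         (alpha : nat -> nat -> R) (Q : nat -> 'M[R]_(n, m)) (Rf : nat -> 'M[R]_m)
         (theta : nat -> nat -> R),
    (* A symmetric positive definite with eigenvalues lam (with multiplicity) *)
    A^T = A ->
    (forall v : 'cV[R]_n, v != 0 -> 0 < (v^T *m A *m v) 0 0) ->
    char_poly A = \prod_(i < n) ('X - (lam i)%:P) ->
    (* positive initial step sizes *)
    (forall j, (j < m)%N -> 0 < alpha 0%N j) ->
    (* LMSD iteration *)
    (forall k j, (j < m)%N -> x k j.+1 = x k j - alpha k j *: grad A b (x k j)) ->
    (forall k, x k.+1 0%N = x k m) ->
    (* thin QR factorization of G_k *)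
    (forall k, Gmat m A b x k = Q k *m Rf k) ->
    (forall k, (Q k)^T *m Q k = 1%:M) ->
    (forall k, upper_trig (Rf k)) ->
    (* eigenvalues of T_k = Q_k^T A Q_k, in nonincreasing order, and new step sizes *)
    (forall k, char_poly ((Q k)^T *m A *m Q k) = \prod_(j < m) ('X - (theta k j)%:P)) ->
    (forall k i j, (i <= j)%N -> (j < m)%N -> theta k j <= theta k i) ->
    (forall k j, (j < m)%N -> alpha k.+1 j = (theta k j)^-1) ->
    (* standing assumption *)
    (forall k j, (j < m)%N -> grad A b (x k j) != 0) ->
    (forall k, row_free (Gmat m A b x k)^T) ->
    (forall k (v : 'cV[R]_m),
        vnorm (invmx (Rf k) *m v) <= rho / vnorm (grad A b (x k 0%N)) * vnorm v) ->
    exists c1 : R, 0 < c1 /\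
      forall k : nat,
        vnorm (grad A b (x k 0%N)) <= c1 * c2 ^+ k.+1 * vnorm (grad A b (x 0%N 0%N)).
Proof.
move=> m0 rho1.
case: n lam => [|n'] lam lam0 lammono.
  exists (1 / 2%:R); split.
    by rewrite divr_gt0 ?ltr0n //= ltr_pdivrMr ?ltr0n // mul1r ltr1n.
  move=> A b x alpha Q Rf theta _ _ _ _ _ _ _ _ _ _ _ _ Hgnz.
  by have := Hgnz 0%N 0%N m0; rewrite [grad _ _ _]flatmx0 eqxx.
set lo := lam ord0; set hi := lam ord_max.
have lo0 : 0 < lo by apply: lam0.
have lohi : lo <= hi by apply: lammono.
have hi0 : 0 < hi by apply: lt_le_trans lohi.
exists (1 - lo / (2%:R * hi)); split.
  have w0 : 0 < lo / (2%:R * hi) by rewrite divr_gt0 // mulr_gt0 ?ltr0n.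
  have w1 : lo / (2%:R * hi) <= 1 / 2%:R.
    by rewrite ler_pdivrMr ?mulr_gt0 ?ltr0n // mulrA divfK ?pnatr_eq0 // mul1r.
  apply/andP; split; last by rewrite ltrBlDr ltrDl.
  by rewrite subr_gt0; apply: le_lt_trans w1 _; rewrite ltr_pdivrMr ?ltr0n // mul1r ltr1n.
move=> A b x alpha Q Rf theta HA _ Hch _ Hx Hx0 HQR HQQ _ Hth _ Hal Hgnz Hfree Hrho.
have [r [mu [P [muinj [mulam [AP [PA [Psym Psum]]]]]]]] := spectral HA Hch.
have mub : forall s, lo <= mu s <= hi.
  move=> s; have [i ->] := mulam s.
  by rewrite !lammono // -ltnS ltn_ord.
have [F [F0 HF]] := conv m0 rho1 lo0 lohi HA muinj AP PA Psym Psum mub Hx Hx0 HQR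
  HQQ Hth Hal Hgnz Hfree Hrho.
set del := 1 - lo / (2%:R * hi) in HF *.
have d0 : 0 < del.
  rewrite /del subr_gt0 ltr_pdivrMr ?mulr_gt0 ?ltr0n // mul1r.
  by apply: le_lt_trans lohi _; rewrite mulr_natl mulr2n ltrDr.
set H0 := vnorm (grad A b (x 0%N 0%N)).
have H00 : 0 < H0.
  by rewrite /H0 vnormE sqrtr_gt0; apply: dotv_gt0; apply: Hgnz.
have sF0 : 0 <= Num.sqrt F by apply: sqrtr_ge0.
exists ((Num.sqrt F + H0) / (del * H0)); split.
  by rewrite divr_gt0 ?mulr_gt0 // ltr_wpDl.
have ce : forall k, (Num.sqrt F + H0) / (del * H0) * del ^+ k.+1 * H0 =
                   (Num.sqrt F + H0) * del ^+ k.
  by move=> k; rewrite exprS; field; rewrite !gt_eqF.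
case=> [|k]; rewrite ce.
  by rewrite expr0 mulr1 lerDr.
rewrite vnormE; apply: le_trans (ler_wsqrtr (HF k.+1 isT)) _.
rewrite -exprM mulnC exprM sqrtrM // sqrtr_sqr ger0_norm ?exprn_ge0 ?ltW //.
by rewrite ltr_pM2r ?exprn_gt0 // ltrDl.
Qed.
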